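(* Let $n\ge1$ and let $\mathscr{Q}$ be the set of all subsets of the Hamming cube $\{0,1\}^n\subset\ell_1^{(n)}$ (with the $\ell_1$ metric) that have strict $1$-negative type. Then there exists $q>1$ such that $\mathfrak{q}(S)\ge q$ for all $S\in\mathscr{Q}$.
   Context: For $p\ge0$, a metric space $(X,d)$ has $p$-negative type if for all finite $\{x_1,\ldots,x_m\}\subseteq X$ ($m\ge2$) and all reals $\eta_1,\ldots,\eta_m$ with $\sum\eta_i=0$, $\sum_{i,j}d(x_i,x_j)^p\eta_i\eta_j\le 0$; it has strict $p$-negative type if moreover this inequality is strict whenever $(\eta_1,\ldots,\eta_m)\ne0$. $p$ is a generalized roundness exponent if for all $m$ and all $a_1,\ldots,a_m,b_1,\ldots,b_m\in X$, $\sum_{k<l}\{d(a_k,a_l)^p+d(b_k,b_l)^p\}\le\sum_{j,i}d(a_j,b_i)^p$; the generalized roundness $\mathfrak{q}(X)$ is the supremum of all generalized roundness exponents. *)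

(* Defs.v *)
From HB Require Import structures.
From mathcomp Require Import all_boot all_order all_algebra.
From mathcomp Require Import all_classical all_reals.
From mathcomp Require Import ereal exp.
Set Implicit Arguments. Unset Strict Implicit. Unset Printing Implicit Defensive.
Import Order.TTheory GRing.Theory Num.Theory.
Local Open Scope ring_scope.
Local Open Scope classical_set_scope.

Section Defs.
Variable R : realType.

Definition cube (n : nat) := {ffun 'I_n -> bool}.

Definition hamming_dist (n : nat) (x y : cube n) : R :=
  \sum_(i < n) `| (x i : nat)%:R - (y i : nat)%:R |.

Variable T : Type.
Variable d : T -> T -> R.

Definition neg_type (S : set T) (p : R) : Prop :=
  forall (m : nat) (x : 'I_m -> T) (eta : 'I_m -> R),
    (2 <= m)%N -> injective x -> (forall i, S (x i)) ->
    \sum_(i < m) eta i = 0 ->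
    \sum_(i < m) \sum_(j < m) d (x i) (x j) `^ p * eta i * eta j <= 0.

Definition strict_neg_type (S : set T) (p : R) : Prop :=
  neg_type S p /\
  forall (m : nat) (x : 'I_m -> T) (eta : 'I_m -> R),
    (2 <= m)%N -> injective x -> (forall i, S (x i)) ->
    \sum_(i < m) eta i = 0 -> (exists i, eta i != 0) ->
    \sum_(i < m) \sum_(j < m) d (x i) (x j) `^ p * eta i * eta j < 0.

Definition gr_exponent (S : set T) (p : R) : Prop :=
  forall (m : nat) (a b : 'I_m -> T),
    (forall i, S (a i)) -> (forall i, S (b i)) ->
    \sum_(k < m) \sum_(l < m | (k < l)%N) (d (a k) (a l) `^ p + d (b k) (b l) `^ p)
    <= \sum_(j < m) \sum_(i < m) d (a j) (b i) `^ p.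

Definition gen_roundness (S : set T) : \bar R :=
  ereal_sup [set (p%:E) | p in [set p : R | 0 <= p /\ gr_exponent S p]].

End Defs.

(* Main.v *)
Require Import Defs.
From HB Require Import structures.
From mathcomp Require Import all_boot all_order all_algebra.
From mathcomp Require Import all_classical all_reals.
From mathcomp Require Import ereal exp.
From mathcomp Require Import topology normedtype derive.
From mathcomp Require Import ring lra zify.
Import Order.TTheory GRing.Theory Num.Theory numFieldNormedType.Exports.
Local Open Scope ring_scope.
Local Open Scope classical_set_scope.
Section CoreS.
Variable R : realType.
Variable N : nat.

Definition Qf (E : 'I_N -> 'I_N -> R) (v : 'rV[R]_N) :=
  \sum_(i < N) \sum_(j < N) E i j * v ord0 i * v ord0 j.

Definition ssum (v : 'rV[R]_N) := \sum_(i < N) v ord0 i.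

Lemma cont_sum (T : topologicalType) (I : Type) (r : seq I) (P : pred I)
  (g : I -> T -> R) :
  (forall i, continuous (g i)) -> continuous (fun t => \sum_(i <- r | P i) g i t).
Proof.
move=> hg; elim: r => [|a r IH].
  under eq_fun do rewrite big_nil; exact: cst_continuous.
case: (boolP (P a)) => Pa.
  under eq_fun do rewrite big_cons Pa.
  by move=> t; apply: continuousD; [exact: hg | exact: IH].
by under eq_fun do rewrite big_cons (negbTE Pa).
Qed.

Lemma ssum_cont : continuous ssum.
Proof. by apply: cont_sum => i; exact: coord_continuous. Qed.

Lemma Qf_cont E : continuous (Qf E).
Proof.
apply: cont_sum => i; apply: cont_sum => j t.
apply: (@continuousM _ _ (fun t : 'rV[R]_N => E i j * t ord0 i) (fun t => t ord0 j)); last exact: coord_continuous.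
apply: (@continuousM _ _ (fun=> E i j) (fun t : 'rV[R]_N => t ord0 i)); last exact: coord_continuous.
exact: cst_continuous.
Qed.

Lemma QfZ E a v : Qf E (a *: v) = a ^+ 2 * Qf E v.
Proof.
rewrite /Qf mulr_sumr; apply: eq_bigr => i _; rewrite mulr_sumr.
by apply: eq_bigr => j _; rewrite !mxE; ring.
Qed.

Lemma ssumZ a v : ssum (a *: v) = a * ssum v.
Proof. by rewrite /ssum mulr_sumr; apply: eq_bigr => i _; rewrite mxE. Qed.

Lemma Qf0 E : Qf E 0 = 0.
Proof. by rewrite -(scale0r (0 : 'rV[R]_N)) QfZ expr2 !mul0r. Qed.

Lemma coord_le_norm (v : 'rV[R]_N) i : `|v ord0 i| <= `|v|.
Proof.
have /mapP[j Hj ->] : `|v ord0 i| \in [seq `|v x.1 x.2| | x : 'I_1 * 'I_N].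
  by apply/mapP; exists (ord0, i) => //=; rewrite mem_enum.
by rewrite -[`|v|]/(mx_norm v) mx_normrE; apply/bigmax_geP; right => /=; exists j.
Qed.

Lemma core_def (D : 'I_N -> 'I_N -> R) :
  (forall v, ssum v = 0 -> v != 0 -> Qf D v < 0) ->
  exists2 c : R, 0 < c & forall v, ssum v = 0 -> Qf D v <= - c * `|v| ^+ 2.
Proof.
move=> hneg.
pose K := (ssum @^-1` [set x | x = 0]) `&` ((fun v : 'rV[R]_N => `|v|) @^-1` [set x : R | x = 1]).
have inK : forall v, ssum v = 0 -> v != 0 -> K (`|v|^-1 *: v).
  move=> v s0 v0; split => /=; first by rewrite ssumZ s0 mulr0.
  by rewrite normrZ normfV normr_id mulVf // normr_eq0.
have Qfv : forall v, Qf D v = `|v| ^+ 2 * Qf D (`|v|^-1 *: v) \/ v = 0.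
  move=> v; have [->|v0] := eqVneq v 0; first by right.
  left; rewrite QfZ mulrA -exprMn mulfV ?expr1n ?mul1r // normr_eq0 //.
have [[w Kw]|K0] := pselect (K !=set0); last first.
  exists 1 => // v s0; have [->|v0] := eqVneq v 0.
    by rewrite Qf0 normr0 expr2 !mulr0.
  by exfalso; apply: K0; exists (`|v|^-1 *: v); exact: inK.
have cK : compact K.
  apply: bounded_closed_compact.
    exists 1; split => // M M1 v [_ /= ->]; exact: ltW.
  apply: closedI.
    apply: preimage_closed; last exact: closed_eq.
    by move=> x _; exact: ssum_cont.
  apply: preimage_closed; last exact: closed_eq.
  by move=> x _; exact: norm_continuous.
have [c cinK cmax] := @EVT_max_rV R N (Qf D) K (ex_intro _ w Kw) cK
  (continuous_subspaceT (@Qf_cont D)).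
move: cinK; rewrite inE => -[/= cs cn].
have c0 : c != 0 by apply/eqP => c0; move: cn; rewrite c0 normr0 => /eqP; rewrite eq_sym oner_eq0.
have M0 := hneg c cs c0.
exists (- Qf D c); first by rewrite oppr_gt0.
move=> v s0; have [->|v0] := eqVneq v 0.
  by rewrite Qf0 normr0 expr2 !mulr0.
have [->|/eqP] := Qfv v; last by rewrite (negbTE v0).
rewrite opprK mulrC; apply: ler_wpM2r; first exact: sqr_ge0.
by apply: cmax; rewrite inE; exact: inK.
Qed.

Lemma Qf_perturb (E D : 'I_N -> 'I_N -> R) eps v : 0 <= eps ->
  (forall i j, `|E i j - D i j| <= eps) ->
  Qf E v <= Qf D v + (N * N)%:R * eps * `|v| ^+ 2.
Proof.
move=> e0 hED.
have -> : Qf E v = Qf D v + \sum_(i < N) \sum_(j < N) (E i j - D i j) * v ord0 i * v ord0 j.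
  rewrite /Qf -big_split; apply: eq_bigr => i _; rewrite -big_split.
  by apply: eq_bigr => j _ /=; ring.
rewrite lerD2l.
have -> : (N * N)%:R * eps * `|v| ^+ 2 = \sum_(i < N) \sum_(j < N) (eps * `|v| ^+ 2).
  by rewrite !sumr_const card_ord -mulrnA natrM -mulr_natl; ring.
apply: ler_sum => i _; apply: ler_sum => j _.
apply: le_trans (ler_norm _) _.
rewrite !normrM expr2 mulrA.
apply: ler_pM; [by rewrite mulr_ge0 | by [] | | exact: coord_le_norm].
apply: ler_pM => //; exact: coord_le_norm.
Qed.
End CoreS.

Section Qsel.
Variable R : realType.

Lemma bernoulli_ineq (h : R) K : 0 <= h -> 1 + K%:R * h <= (1 + h) ^+ K.
Proof.
move=> h0; elim: K => [|K IH]; first by rewrite mul0r addr0 expr0.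
rewrite exprSr.
have H : (1 + K%:R * h) * (1 + h) <= (1 + h) ^+ K * (1 + h).
  by apply: ler_wpM2r => //; lra.
apply: le_trans H; rewrite -natr1.
have : 0 <= K%:R * h * h by rewrite mulr_ge0 // mulr_ge0.
nra.
Qed.

Lemma root_bound (n K : nat) (h : R) : 0 < h -> n%:R < K.+1%:R * h ->
  n%:R `^ (K.+1%:R^-1) <= 1 + h.
Proof.
move=> h0 nK; rewrite leNgt; apply/negP => ht.
set t := n%:R `^ _ in ht.
have tK : t ^+ K.+1 = n%:R.
  by rewrite /t -powR_mulrn ?powR_ge0 // -powRrM mulVf // powRr1.
have : (1 + h) `^ K.+1%:R <= t `^ K.+1%:R.
  apply: ge0_ler_powR => //; rewrite ?nnegrE ?powR_ge0 //; last exact: ltW.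
  by rewrite addr_ge0 // ltW.
have h1 : 0 <= 1 + h by rewrite addr_ge0 // ltW.
rewrite (powR_mulrn _ h1) (powR_mulrn _ (powR_ge0 _ _)) tK => H.
have := bernoulli_ineq h K.+1 (ltW h0); lra.
Qed.

Lemma qsel (n : nat) (eps : R) : 0 < eps ->
  exists2 q : R, 1 < q & forall k : nat, (k <= n)%N -> `|k%:R `^ q - k%:R| <= eps.
Proof.
move=> e0.
pose h := eps / n.+1%:R.
have h0 : 0 < h by rewrite divr_gt0.
pose K := Num.truncn (n%:R / h).
have nK : n%:R < K.+1%:R * h.
  by rewrite -ltr_pdivrMr // truncnS_gt.
exists (1 + K.+1%:R^-1); first by rewrite ltrDl invr_gt0.
move=> k kn.
have q0 : 1 + K.+1%:R^-1 != 0 :> R by rewrite gt_eqF // ltr_wpDr // ltW // invr_gt0.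
case: k kn => [|k] kn.
  by rewrite powR0 // subr0 normr0 ltW.
rewrite powRD; last by apply/implyP => _; rewrite pnatr_eq0.
rewrite powRr1 //.
set u := _ `^ _.
have u1 : 1 <= u.
  have -> : (1 : R) = k.+1%:R `^ 0 by rewrite powRr0.
  by apply: ler_powR; [rewrite ler1n | rewrite invr_ge0].
have un : u <= 1 + h.
  apply: le_trans (@root_bound n K h h0 nK).
  apply: ge0_ler_powR; rewrite ?nnegrE ?invr_ge0 //.
  by rewrite ler_nat.
have kn' : k.+1%:R <= n%:R :> R by rewrite ler_nat.
have -> : k.+1%:R * u - k.+1%:R = k.+1%:R * (u - 1) by ring.
rewrite ger0_norm ?mulr_ge0 ?subr_ge0 //.
have hn : n%:R * h <= eps.
  by rewrite /h mulrCA ger_pMr // ler_pdivrMr ?ltr0n // mul1r ler_nat.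
apply: le_trans hn; apply: ler_pM => //; first by rewrite subr_ge0.
lra.
Qed.
End Qsel.

Section P2.
Variable R : realType.
Variable n : nat.
Local Notation hd := (@hamming_dist R n).

Lemma hd_nat (x y : cube n) : hd x y = (\sum_(i < n) (x i != y i))%:R.
Proof.
rewrite /hamming_dist natr_sum; apply: eq_bigr => i _.
case: (x i); case: (y i).
- by rewrite subrr normr0.
- by rewrite subr0 normr1.
- by rewrite sub0r normrN normr1.
- by rewrite subrr normr0.
Qed.

Lemma hd_le (x y : cube n) : (\sum_(i < n) (x i != y i) <= n)%N.
Proof.
apply: (@leq_trans (\sum_(i < n) 1)%N); first by apply: leq_sum => i _; case: (_ != _).
by rewrite sum1_card card_ord.
Qed.

Lemma hd_sym (x y : cube n) : hd x y = hd y x.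
Proof. by apply: eq_bigr => i _; rewrite distrC. Qed.

Lemma hd_xx (x : cube n) : hd x x = 0.
Proof. by rewrite /hamming_dist big1 // => i _; rewrite subrr normr0. Qed.

Lemma sym_sum m (f : 'I_m -> 'I_m -> R) :
  (forall k l, f k l = f l k) -> (forall k, f k k = 0) ->
  \sum_(k < m) \sum_(l < m) f k l = 2 * \sum_(k < m) \sum_(l < m | (k < l)%N) f k l.
Proof.
move=> fs fd.
have E1 : forall k, \sum_(l < m) f k l =
    \sum_(l < m | (k < l)%N) f k l + \sum_(l < m | (l < k)%N) f k l.
  move=> k; rewrite (bigID (fun l : 'I_m => (k < l)%N)) /=; congr (_ + _).
  rewrite (bigID (fun l : 'I_m => (l < k)%N)) /= [X in _ + X]big1 ?addr0.
    by apply: eq_bigl => l; case: ltngtP.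
  move=> l /andP[h1 h2]; have -> : l = k.
    apply/val_inj/eqP; rewrite eqn_leq; move: h1 h2; by rewrite -!leqNgt => -> ->.
  exact: fd.
rewrite (eq_bigr _ (fun k _ => E1 k)) big_split /=.
have -> : \sum_(k < m) \sum_(l < m | (l < k)%N) f k l =
          \sum_(k < m) \sum_(l < m | (k < l)%N) f k l.
  rewrite (eq_bigr (fun k : 'I_m => \sum_(l < m) if (l < k)%N then f k l else 0));
    last by move=> k _; rewrite big_mkcond.
  rewrite exchange_big /=; apply: eq_bigr => l _; rewrite [RHS]big_mkcond /=.
  by apply: eq_bigr => k _; case: ifP => // _; rewrite fs.
by rewrite mulr2n mulrDl mul1r.
Qed.

Variable A : {set cube n}.
Local Notation N := #|A|.
Definition pA (i : 'I_N) : cube n := enum_val i.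

Lemma pA_in i : pA i \in A.
Proof. exact: enum_valP. Qed.

Lemma pick_sum z (G : cube n -> R) : z \in A ->
  \sum_(i < N) (z == pA i)%:R * G (pA i) = G z.
Proof.
move=> zA; rewrite /pA -(big_enum_val (fun x => (z == x)%:R * G x)) /=.
rewrite (bigD1 z) //= eqxx mul1r big1 ?addr0 // => x /andP[_ xz].
by rewrite eq_sym (negbTE xz) mul0r.
Qed.

Lemma pick_sum2 z w (G : cube n -> R) : z \in A -> w \in A ->
  \sum_(i < N) ((z == pA i)%:R - (w == pA i)%:R) * G (pA i) = G z - G w.
Proof.
move=> zA wA; rewrite -(pick_sum _ G zA) -(pick_sum _ G wA) -sumrB.
by apply: eq_bigr => i _; rewrite mulrBl.
Qed.

Definition vec m (a b : 'I_m -> cube n) : 'rV[R]_N :=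
  \row_i \sum_(k < m) ((a k == pA i)%:R - (b k == pA i)%:R).
Arguments vec {m} a b.

Lemma vec_sum m (a b : 'I_m -> cube n) : (forall k, a k \in A) -> (forall k, b k \in A) ->
  \sum_(i < N) vec a b ord0 i = 0.
Proof.
move=> aA bA; rewrite /vec.
under eq_bigr do rewrite mxE.
rewrite exchange_big /= big1 // => k _.
have H := pick_sum2 _ _ (fun=> 1) (aA k) (bA k).
rewrite subrr in H; rewrite -[RHS]H; apply: eq_bigr => i _; by rewrite mulr1.
Qed.

Lemma quad_expand m (w : 'rV[R]_N) (al : 'I_m -> 'I_N -> R) (G : 'I_N -> 'I_N -> R) :
  (forall i, w ord0 i = \sum_(k < m) al k i) ->
  \sum_(i < N) \sum_(j < N) G i j * w ord0 i * w ord0 j =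
  \sum_(k < m) \sum_(l < m) \sum_(i < N) al k i * \sum_(j < N) al l j * G i j.
Proof.
move=> hw.
have -> : \sum_(i < N) \sum_(j < N) G i j * w ord0 i * w ord0 j =
  \sum_(i < N) \sum_(j < N) \sum_(k < m) \sum_(l < m) G i j * al k i * al l j.
  apply: eq_bigr => i _; apply: eq_bigr => j _; rewrite !hw -mulrA big_distrlr mulr_sumr.
  apply: eq_bigr => k _; rewrite mulr_sumr; apply: eq_bigr => l _ /=; by rewrite mulrA.
rewrite (eq_bigr (fun i => \sum_(k < m) \sum_(j < N) \sum_(l < m)
    G i j * al k i * al l j)); last by move=> i _; rewrite exchange_big.
rewrite exchange_big /=; apply: eq_bigr => k _.
rewrite (eq_bigr (fun i => \sum_(l < m) \sum_(j < N)
    G i j * al k i * al l j)); last by move=> i _; rewrite exchange_big.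
rewrite exchange_big /=; apply: eq_bigr => l _.
apply: eq_bigr => i _; rewrite mulr_sumr; apply: eq_bigr => j _; ring.
Qed.

Definition alph m (a b : 'I_m -> cube n) (k : 'I_m) (i : 'I_N) : R :=
  (a k == pA i)%:R - (b k == pA i)%:R.
Arguments alph {m} a b k i.

Lemma vec_Q m (a b : 'I_m -> cube n) (g : cube n -> cube n -> R) :
  (forall k, a k \in A) -> (forall k, b k \in A) ->
  \sum_(i < N) \sum_(j < N) g (pA i) (pA j) * vec a b ord0 i * vec a b ord0 j =
  \sum_(k < m) \sum_(l < m)
     (g (a k) (a l) - g (a k) (b l) - (g (b k) (a l) - g (b k) (b l))).
Proof.
move=> aA bA.
rewrite (@quad_expand m (vec a b) (alph a b) (fun i j => g (pA i) (pA j))); last first.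
  by move=> i; rewrite /vec mxE.
apply: eq_bigr => k _; apply: eq_bigr => l _.
under eq_bigr do rewrite /alph (pick_sum2 _ _ _ (aA l) (bA l)).
exact: (pick_sum2 _ _ (fun z => g z (a l) - g z (b l)) (aA k) (bA k)).
Qed.


End P2.

Arguments pA {n} A i.
Arguments vec {R n} A {m} a b.
Arguments vec_sum {R n A m a b}.
Arguments core_def {R N D}.
Arguments ssum {R N} v.
Arguments Qf {R N} E v.

Section P3.
Variable R : realType.
Variable n : nat.
Local Notation hd := (@hamming_dist R n).

Lemma perA (A : {set cube n}) :
  strict_neg_type hd (fun x => x \in A) 1 ->
  exists2 q : R, 1 < q & gr_exponent hd (fun x => x \in A) q.
Proof.
move=> [_ hs].
pose D := fun i j : 'I_#|A| => hd (pA A i) (pA A j) `^ 1.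
have hneg : forall v : 'rV[R]_#|A|, ssum v = 0 -> v != 0 -> Qf D v < 0.
  move=> v s0 v0.
  have [i vi] : exists i, v ord0 i != 0.
    case: (pselect (exists i, v ord0 i != 0)) => // H; exfalso.
    move/negP: v0; apply; apply/eqP/matrixP => r c; rewrite (ord1 r) mxE.
    case: (eqVneq (v ord0 c) 0) => // hc; exfalso; apply: H; exists c; exact: hc.
  have N2 : (2 <= #|A|)%N.
    rewrite ltnNge; apply/negP => hN.
    move: s0; rewrite /ssum (bigD1 i) //= big1 ?addr0 => [hv|j ji].
      by move: vi; rewrite hv eqxx.
    exfalso; move/negP: ji; apply; apply/eqP.
    have hi := leq_trans (ltn_ord i) hN; have hj := leq_trans (ltn_ord j) hN.
    have hji : nat_of_ord j = nat_of_ord i by lia.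
    exact: ord_inj.
  apply: (hs #|A| (pA A) (fun i => v ord0 i) N2).
  - exact: enum_val_inj.
  - by move=> k; exact: pA_in.
  - exact: s0.
  - by exists i.
have [c c0 hc] := core_def hneg.
pose eps := c / (#|A| * #|A|).+1%:R.
have eps0 : 0 < eps by rewrite divr_gt0.
have [q q1 hq] := @qsel R n eps eps0.
have qn0 : q != 0 by rewrite gt_eqF // (lt_trans ltr01).
exists q => // m a b aA bA.
pose E := fun i j : 'I_#|A| => hd (pA A i) (pA A j) `^ q.
have hE : Qf E (vec A a b) <= 0.
  apply: le_trans (@Qf_perturb R #|A| E D eps (vec A a b) (ltW eps0) _) _.
    move=> i j; rewrite /E /D hd_nat powRr1 ?ler0n //; apply: hq; exact: hd_le.
  have := hc (vec A a b) (vec_sum aA bA).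
  have Xc : (#|A| * #|A|)%:R * eps <= c.
    rewrite /eps mulrCA ger_pMr // ler_pdivrMr ?ltr0n // mul1r ler_nat.
    exact: leqnSn.
  have H0 : 0 <= c - (#|A| * #|A|)%:R * eps by rewrite subr_ge0.
  have := mulr_ge0 H0 (sqr_ge0 `|vec A a b|).
  nra.
have HQ := @vec_Q R n A m a b (fun x y => hd x y `^ q) aA bA.
move: hE; rewrite /Qf /E HQ.
have e : forall k, \sum_(l < m) (hd (a k) (a l) `^ q - hd (a k) (b l) `^ q -
    (hd (b k) (a l) `^ q - hd (b k) (b l) `^ q)) =
    \sum_(l < m) hd (a k) (a l) `^ q - \sum_(l < m) hd (a k) (b l) `^ q -
    (\sum_(l < m) hd (b k) (a l) `^ q - \sum_(l < m) hd (b k) (b l) `^ q).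
  by move=> k; rewrite !sumrB.
rewrite (eq_bigr _ (fun k _ => e k)) !sumrB.
rewrite (@sym_sum R m (fun k l => hd (a k) (a l) `^ q)); last 2 first.
- by move=> k l; rewrite hd_sym.
- by move=> k; rewrite hd_xx powR0.
rewrite (@sym_sum R m (fun k l => hd (b k) (b l) `^ q)); last 2 first.
- by move=> k l; rewrite hd_sym.
- by move=> k; rewrite hd_xx powR0.
have -> : \sum_(k < m) \sum_(l < m) hd (b k) (a l) `^ q =
          \sum_(k < m) \sum_(l < m) hd (a k) (b l) `^ q.
  rewrite exchange_big /=; apply: eq_bigr => k _; apply: eq_bigr => l _.
  by rewrite hd_sym.
have -> : \sum_(k < m) \sum_(l < m | (k < l)%N) (hd (a k) (a l) `^ q + hd (b k) (b l) `^ q) =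
  \sum_(k < m) \sum_(l < m | (k < l)%N) hd (a k) (a l) `^ q +
  \sum_(k < m) \sum_(l < m | (k < l)%N) hd (b k) (b l) `^ q.
  by rewrite -big_split; apply: eq_bigr => k _; rewrite big_split.
lra.
Qed.

End P3.

Section Final.
Variable R : realType.
Variable n : nat.
Local Notation hd := (@hamming_dist R n).

Definition Good (A : {set cube n}) (q : R) :=
  strict_neg_type hd (fun x => x \in A) 1 ->
  (q%:E <= gen_roundness hd (fun x => x \in A))%E.

Lemma good_A A : exists2 q : R, 1 < q & Good A q.
Proof.
case: (pselect (strict_neg_type hd (fun x => x \in A) 1)) => H; last first.
  exists 2; [lra | by move=> /H].
have [q q1 hq] := @perA R n A H.
exists q => // _; apply: ereal_sup_ubound; exists q => //; split => //.
by rewrite (le_trans ler01) // ltW.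
Qed.

Lemma good_list (s : seq {set cube n}) :
  exists2 q : R, 1 < q & forall A, A \in s -> Good A q.
Proof.
elim: s => [|A s [q1 q11 IH]]; first by exists 2 => //; lra.
have [q2 q21 h2] := good_A A.
exists (Num.min q1 q2); first by rewrite lt_min q11 q21.
move=> B; rewrite inE => /orP[/eqP ->|Bs] hS.
  by apply: le_trans (h2 hS); rewrite lee_fin ge_min lexx orbT.
by apply: le_trans (IH B Bs hS); rewrite lee_fin ge_min lexx.
Qed.

End Final.

Theorem corollary4p6 (R : realType) (n : nat) (hn : (1 <= n)%N) :
  exists q : R, 1 < q /\
    forall S : set (cube n),
      strict_neg_type (@hamming_dist R n) S 1 ->
      (q%:E <= gen_roundness (@hamming_dist R n) S)%E.
Proof.
have [q q1 hq] := @good_list R n (enum {set cube n}).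
exists q; split => // S hS.
pose A := [set x | `[< S x >]]%SET.
have SA : S = (fun x => x \in A).
  by apply/funext => x; apply/propext; rewrite inE asboolE.
rewrite SA in hS *; apply: (hq A) => //; by rewrite mem_enum.
Qed.
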